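(* Let $(E,P,\vartheta)$ be a complete bipolar metric space and let $F\colon E\cup P\to E\cup P$ be a covariant mapping which is a polynomial contraction, i.e. there exist $\pi\in(0,1)$, an integer $\sigma\geq 1$ and functions $q_\upsilon\colon E\times P\to[0,\infty)$, $\upsilon=0,\dots,\sigma$, such that $$\sum_{\upsilon=0}^{\sigma} q_\upsilon(Fe,Ff)\,\vartheta^\upsilon(Fe,Ff)\leq \pi\sum_{\upsilon=0}^{\sigma} q_\upsilon(e,f)\,\vartheta^\upsilon(e,f)\quad\text{for all } e\in E,\ f\in P.$$ Assume moreover that (i) $F$ is continuous, and (ii) there exist $\varrho\in\{1,\dots,\sigma\}$ and $Q_\varrho>0$ such that $q_\varrho(e,f)\geq Q_\varrho$ for all $e\in E$, $f\in P$. Then $F$ has a unique fixed point.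
   Context: A bipolar metric space is a triple $(E,P,\vartheta)$ where $E,P$ are nonempty sets and $\vartheta\colon E\times P\to[0,\infty)$ satisfies: (1) for $e\in E$, $f\in P$, $\vartheta(e,f)=0$ iff $e=f$; (2) $\vartheta(e,f)=\vartheta(f,e)$ whenever $e,f\in E\cap P$; (3) $\vartheta(e,f)\leq\vartheta(e,z)+\vartheta(r,z)+\vartheta(r,f)$ for all $e,r\in E$, $z,f\in P$. A sequence $(x_n)$ in $E$ converges to $y\in P$ if $\vartheta(x_n,y)\to0$; a sequence $(y_n)$ in $P$ converges to $x\in E$ if $\vartheta(x,y_n)\to 0$. A bisequence $(x_n,y_n)$ with $x_n\in E$, $y_n\in P$ is convergent if both $(x_n)$ and $(y_n)$ converge, biconvergent if they converge to the same point, and Cauchy if for every $\varepsilon>0$ there is $N$ with $\vartheta(x_n,y_m)<\varepsilon$ for all $n,m\geq N$. The space is complete if every Cauchy bisequence is convergent. A map $F\colon E\cup P\to E\cup P$ is covariant if $F(E)\subseteq E$ and $F(P)\subseteq P$. $F$ is continuous if whenever a sequence $(u_n)$ (in $E$ or in $P$) converges to a point $v$, the sequence $(Fu_n)$ converges to $Fv$. $\vartheta^\upsilon$ denotes the $\upsilon$-th power of $\vartheta$, with $\vartheta^0\equiv 1$. A fixed point of $F$ is a point $g$ with $Fg=g$. *)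

(* Defs.v *)
From Stdlib Require Export Reals.
Open Scope R_scope.

(* A bipolar metric space on subsets E, P of an ambient type U.
   The distance theta is a total function U -> U -> R, but only its
   values on E x P are meaningful. *)
Definition bipolar_metric {U : Type} (E P : U -> Prop) (theta : U -> U -> R) : Prop :=
  (exists e, E e) /\ (exists p, P p) /\
  (forall e f, E e -> P f -> 0 <= theta e f) /\
  (forall e f, E e -> P f -> (theta e f = 0 <-> e = f)) /\
  (forall e f, E e -> P e -> E f -> P f -> theta e f = theta f e) /\
  (forall e r z f, E e -> E r -> P z -> P f ->
     theta e f <= theta e z + theta r z + theta r f).

Definition cvg_EP {U : Type} (theta : U -> U -> R) (x : nat -> U) (y : U) : Prop :=
  Un_cv (fun n => theta (x n) y) 0.

Definition cvg_PE {U : Type} (theta : U -> U -> R) (y : nat -> U) (x : U) : Prop :=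
  Un_cv (fun n => theta x (y n)) 0.

Definition cauchy_biseq {U : Type} (theta : U -> U -> R) (x y : nat -> U) : Prop :=
  forall eps, 0 < eps -> exists N : nat,
    forall n m, (n >= N)%nat -> (m >= N)%nat -> theta (x n) (y m) < eps.

Definition bipolar_complete {U : Type} (E P : U -> Prop) (theta : U -> U -> R) : Prop :=
  forall x y : nat -> U, (forall n, E (x n)) -> (forall n, P (y n)) ->
    cauchy_biseq theta x y ->
    (exists a, P a /\ cvg_EP theta x a) /\ (exists b, E b /\ cvg_PE theta y b).

Definition covariant {U : Type} (E P : U -> Prop) (F : U -> U) : Prop :=
  (forall e, E e -> E (F e)) /\ (forall p, P p -> P (F p)).

Definition bipolar_continuous {U : Type} (E P : U -> Prop) (theta : U -> U -> R)
  (F : U -> U) : Prop :=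
  (forall (x : nat -> U) (y : U), (forall n, E (x n)) -> P y ->
     cvg_EP theta x y -> cvg_EP theta (fun n => F (x n)) (F y)) /\
  (forall (y : nat -> U) (x : U), (forall n, P (y n)) -> E x ->
     cvg_PE theta y x -> cvg_PE theta (fun n => F (y n)) (F x)).

Definition poly_sum {U : Type} (theta : U -> U -> R) (q : nat -> U -> U -> R)
  (sigma : nat) (e f : U) : R :=
  sum_f_R0 (fun u => q u e f * theta e f ^ u) sigma.

Definition polynomial_contraction {U : Type} (E P : U -> Prop) (theta : U -> U -> R)
  (F : U -> U) (pi : R) (sigma : nat) (q : nat -> U -> U -> R) : Prop :=
  0 < pi < 1 /\ (1 <= sigma)%nat /\
  (forall u e f, (u <= sigma)%nat -> E e -> P f -> 0 <= q u e f) /\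
  (forall e f, E e -> P f ->
     poly_sum theta q sigma (F e) (F f) <= pi * poly_sum theta q sigma e f).

(* Main.v *)
Require Import Defs.
From Stdlib Require Import Reals Lra Lia.
Open Scope R_scope.

Lemma term_le_sum (f : nat -> R) n k :
  (forall i, (i <= n)%nat -> 0 <= f i) -> (k <= n)%nat -> f k <= sum_f_R0 f n.
Proof.
  induction n as [|n IH]; intros Hf Hk.
  - replace k with 0%nat by lia. simpl. lra.
  - simpl. destruct (Nat.eq_dec k (S n)) as [->|Hne].
    + assert (0 <= sum_f_R0 f n).
      { clear IH Hk. induction n. simpl. apply Hf; lia. simpl.
        assert (0 <= f (S n)) by (apply Hf; lia).
        assert (0 <= sum_f_R0 f n) by (apply IHn; intros; apply Hf; lia). lra. }
      lra.
    + assert (f k <= sum_f_R0 f n) by (apply IH; [intros; apply Hf; lia| lia]).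
      assert (0 <= f (S n)) by (apply Hf; lia). lra.
Qed.

Lemma sum_nonneg (f : nat -> R) n :
  (forall i, (i <= n)%nat -> 0 <= f i) -> 0 <= sum_f_R0 f n.
Proof.
  intros Hf. apply Rle_trans with (f 0%nat). apply Hf; lia. apply term_le_sum; auto; lia.
Qed.

Lemma pow_lt_strict a b n : (1 <= n)%nat -> 0 <= b -> b < a -> b ^ n < a ^ n.
Proof.
  intros Hn Hb Hba. induction n as [|n IH]; [lia|].
  destruct n as [|n]. simpl. lra.
  assert (b ^ S n < a ^ S n) by (apply IH; lia).
  change (b * b ^ S n < a * a ^ S n).
  assert (0 <= b ^ S n) by (apply pow_le; lra).
  apply Rle_lt_trans with (b * a ^ S n). apply Rmult_le_compat_l; lra.
  apply Rmult_lt_compat_r. lra. lra.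
Qed.

Lemma pow_le_inv a b n : (1 <= n)%nat -> 0 <= a -> 0 <= b -> a ^ n <= b ^ n -> a <= b.
Proof.
  intros Hn Ha Hb H. destruct (Rle_lt_dec a b) as [|Hlt]; auto.
  exfalso. pose proof (pow_lt_strict a b n Hn Hb Hlt). lra.
Qed.

Lemma root_exists K n : (1 <= n)%nat -> 0 < K -> exists c, 0 < c /\ c ^ n = K.
Proof.
  intros Hn HK. exists (Rpower K (/ INR n)). split.
  - unfold Rpower. apply exp_pos.
  - rewrite <- Rpower_pow by (unfold Rpower; apply exp_pos).
    rewrite Rpower_mult. rewrite Rinv_l. apply Rpower_1; auto.
    apply not_0_INR; lia.
Qed.

Lemma lim_zero_le (a : R) (u v w : nat -> R) :
  Un_cv u 0 -> Un_cv v 0 -> Un_cv w 0 ->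
  (forall n, a <= u n + v n + w n) -> a <= 0.
Proof.
  intros Hu Hv Hw H. destruct (Rle_lt_dec a 0) as [|Ha]; auto. exfalso.
  assert (He : 0 < a / 3) by lra.
  destruct (Hu _ He) as [N1 H1]. destruct (Hv _ He) as [N2 H2]. destruct (Hw _ He) as [N3 H3].
  set (N := (N1 + N2 + N3)%nat).
  specialize (H1 N ltac:(unfold N; lia)). specialize (H2 N ltac:(unfold N; lia)).
  specialize (H3 N ltac:(unfold N; lia)). specialize (H N).
  unfold R_dist in *. rewrite Rminus_0_r in *.
  pose proof (Rle_abs (u N)). pose proof (Rle_abs (v N)). pose proof (Rle_abs (w N)). lra.
Qed.

Lemma Rdiv_le_0_compat a b : 0 <= a -> 0 < b -> 0 <= a / b.
Proof. intros. unfold Rdiv. apply Rmult_le_pos; auto. apply Rlt_le, Rinv_0_lt_compat; auto. Qed.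

Lemma cv_shift (u : nat -> R) : Un_cv u 0 -> Un_cv (fun n => u (S n)) 0.
Proof. intros H eps He. destruct (H eps He) as [N HN]. exists N. intros n Hn. apply HN. lia. Qed.

Lemma geo_cv (c r : R) (a : nat -> R) : 0 < r < 1 ->
  (forall n, 0 <= a n <= c * r ^ n) -> Un_cv a 0.
Proof.
  intros Hr Ha eps He.
  assert (Hc : 0 <= c). { destruct (Ha 0%nat). simpl in *. lra. }
  assert (Hc1 : 0 < c + 1) by lra.
  destruct (pow_lt_1_zero r ltac:(rewrite Rabs_pos_eq; lra) (eps / (c+1))
     ltac:(apply Rdiv_lt_0_compat; lra)) as [N HN].
  exists N. intros n Hn. specialize (HN n Hn). specialize (Ha n).
  rewrite Rabs_pos_eq in HN by (apply pow_le; lra).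
  unfold R_dist. rewrite Rminus_0_r, Rabs_pos_eq by lra.
  assert (0 <= r ^ n) by (apply pow_le; lra).
  assert (c * r ^ n <= (c+1) * r ^ n) by nra.
  assert ((c+1) * r ^ n < (c+1) * (eps / (c+1))) by (apply Rmult_lt_compat_l; lra).
  replace ((c+1) * (eps / (c+1))) with eps in * by (field; lra). lra.
Qed.

Theorem theorem3p2 (U : Type) (E P : U -> Prop) (theta : U -> U -> R)
  (F : U -> U) (pi : R) (sigma : nat) (q : nat -> U -> U -> R)
  (rho : nat) (Qrho : R) :
  bipolar_metric E P theta ->
  bipolar_complete E P theta ->
  covariant E P F ->
  polynomial_contraction E P theta F pi sigma q ->
  bipolar_continuous E P theta F ->
  (1 <= rho)%nat -> (rho <= sigma)%nat -> 0 < Qrho ->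
  (forall e f, E e -> P f -> Qrho <= q rho e f) ->
  exists g, (E g \/ P g) /\ F g = g /\
    (forall h, (E h \/ P h) -> F h = h -> h = g).
Proof.
  intros HM HC [HFE HFP] [Hpi [Hsig [Hq Hcon]]] [Hcont _] Hr1 Hr2 HQ Hqr.
  destruct HM as [[e0 He0] [[f0 Hf0] [Hth0 [Hth1 [Hsym Htri]]]]].
  set (SS := poly_sum theta q sigma) in *.
  assert (HS0 : forall e f, E e -> P f -> 0 <= SS e f).
  { intros e f He Hf. unfold SS, poly_sum. apply sum_nonneg. intros i Hi.
    apply Rmult_le_pos. apply Hq; auto. apply pow_le; auto. }
  assert (HSQ : forall e f, E e -> P f -> Qrho * theta e f ^ rho <= SS e f).
  { intros e f He Hf. unfold SS, poly_sum.
    eapply Rle_trans; [| apply (term_le_sum (fun u => q u e f * theta e f ^ u) sigma rho)].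
    - simpl. apply Rmult_le_compat_r. apply pow_le; auto. apply Hqr; auto.
    - intros i Hi. apply Rmult_le_pos. apply Hq; auto. apply pow_le; auto.
    - auto. }
  assert (Hzero : forall e f, E e -> P f -> SS e f <= 0 -> e = f).
  { intros e f He Hf H. apply Hth1; auto.
    assert (theta e f ^ rho <= 0 ^ rho).
    { rewrite pow_i by lia. specialize (HSQ e f He Hf).
      assert (0 <= theta e f ^ rho) by (apply pow_le; auto). nra. }
    apply Rle_antisym. apply (pow_le_inv _ _ rho); auto; lra. auto. }
  assert (Huniq : forall e f, E e -> P f -> F e = e -> F f = f -> e = f).
  { intros e f He Hf H1 H2. apply Hzero; auto.
    pose proof (Hcon e f He Hf). rewrite H1, H2 in H. fold SS in H.
    pose proof (HS0 e f He Hf). nra. }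
  set (x := fun n => Nat.iter n F e0).
  set (y := fun n => Nat.iter n F f0).
  assert (Hx : forall n, E (x n)). { induction n; simpl; auto. }
  assert (Hy : forall n, P (y n)). { induction n; simpl; auto. }
  assert (HxS : forall n, x (S n) = F (x n)) by reflexivity.
  assert (HyS : forall n, y (S n) = F (y n)) by reflexivity.
  assert (Hdiag : forall n, SS (x n) (y n) <= pi ^ n * SS e0 f0).
  { induction n. simpl. unfold x, y; simpl; lra.
    rewrite HxS, HyS. eapply Rle_trans. apply Hcon; auto.
    change (pi ^ S n) with (pi * pi ^ n).
    apply Rle_trans with (pi * (pi ^ n * SS e0 f0)). apply Rmult_le_compat_l; lra. lra. }
  assert (Hoff : forall n, SS (x (S n)) (y n) <= pi ^ n * SS (F e0) f0).
  { induction n. simpl. unfold x, y; simpl; lra.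
    rewrite (HxS (S n)), HyS. eapply Rle_trans. apply Hcon; auto.
    change (pi ^ S n) with (pi * pi ^ n).
    apply Rle_trans with (pi * (pi ^ n * SS (F e0) f0)). apply Rmult_le_compat_l; lra. lra. }
  set (K0 := SS e0 f0 / Qrho + SS (F e0) f0 / Qrho + 1).
  assert (HK0 : 0 < K0).
  { unfold K0. pose proof (HS0 e0 f0 He0 Hf0). pose proof (HS0 (F e0) f0 (HFE _ He0) Hf0).
    assert (0 <= SS e0 f0 / Qrho) by (apply Rdiv_le_0_compat; lra).
    assert (0 <= SS (F e0) f0 / Qrho) by (apply Rdiv_le_0_compat; lra). lra. }
  destruct (root_exists K0 rho Hr1 HK0) as [c [Hc Hcr]].
  destruct (root_exists pi rho Hr1 (proj1 Hpi)) as [r [Hr Hrr]].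
  assert (Hr1' : r < 1).
  { destruct (Rlt_le_dec r 1) as [|Hge]; auto. exfalso.
    pose proof (pow_incr 1 r rho ltac:(lra)). rewrite pow1 in H. lra. }
  assert (Hgen : forall e f n B, E e -> P f -> SS e f <= pi ^ n * B -> B <= Qrho * K0 ->
            theta e f <= c * r ^ n).
  { intros e f n B He Hf H1 H2. apply (pow_le_inv _ _ rho); auto.
    apply Rmult_le_pos; [lra| apply pow_le; lra].
    rewrite Rpow_mult_distr, Hcr, <- pow_mult, Nat.mul_comm, pow_mult, Hrr.
    pose proof (HSQ e f He Hf).
    assert (0 < pi ^ n) by (apply pow_lt; lra).
    assert (pi ^ n * B <= pi ^ n * (Qrho * K0)) by (apply Rmult_le_compat_l; lra).
    apply (Rmult_le_reg_l Qrho); auto. nra. }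
  assert (Ha : forall n, theta (x n) (y n) <= c * r ^ n).
  { intro n. apply (Hgen _ _ n (SS e0 f0)); auto.
    unfold K0. pose proof (HS0 (F e0) f0 (HFE _ He0) Hf0).
    replace (Qrho * (SS e0 f0 / Qrho + SS (F e0) f0 / Qrho + 1))
      with (SS e0 f0 + SS (F e0) f0 + Qrho) by (field; lra). lra. }
  assert (Hb : forall n, theta (x (S n)) (y n) <= c * r ^ n).
  { intro n. apply (Hgen _ _ n (SS (F e0) f0)); auto.
    unfold K0. pose proof (HS0 e0 f0 He0 Hf0).
    replace (Qrho * (SS e0 f0 / Qrho + SS (F e0) f0 / Qrho + 1))
      with (SS e0 f0 + SS (F e0) f0 + Qrho) by (field; lra). lra. }
  set (K := c + 2 * c / (1 - r)).
  assert (Hup : forall n k, theta (x n) (y (n + k)%nat) <= K * r ^ n - 2 * c * r ^ (n + k) / (1 - r)).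
  { intros n k. induction k.
    - rewrite Nat.add_0_r. unfold K. specialize (Ha n).
      replace ((c + 2 * c / (1 - r)) * r ^ n - 2 * c * r ^ n / (1 - r)) with (c * r ^ n)
        by (field; lra). auto.
    - replace (n + S k)%nat with (S (n + k)) by lia.
      pose proof (Htri (x n) (x (S (n + k))) (y (n + k)%nat) (y (S (n+k))) (Hx _) (Hx _) (Hy _) (Hy _)).
      pose proof (Hb (n + k)%nat). pose proof (Ha (S (n + k))).
      simpl pow in *. set (t := r ^ (n + k)%nat) in *.
      assert (0 <= t) by (apply pow_le; lra).
      assert (c * (r * t) <= c * t) by (apply Rmult_le_compat_l; [lra|]; nra).
      assert (K * r ^ n - 2 * c * t / (1 - r) + 2 * c * t = K * r ^ n - 2 * c * (r * t) / (1 - r))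
        by (field; lra). lra. }
  assert (Hdown : forall m k, theta (x (m + k)%nat) (y m) <= K * r ^ m - 2 * c * r ^ (m + k) / (1 - r)).
  { intros m k. induction k.
    - rewrite Nat.add_0_r. unfold K. specialize (Ha m).
      replace ((c + 2 * c / (1 - r)) * r ^ m - 2 * c * r ^ m / (1 - r)) with (c * r ^ m)
        by (field; lra). auto.
    - replace (m + S k)%nat with (S (m + k)) by lia.
      pose proof (Htri (x (S (m + k))) (x (m + k)%nat) (y (m + k)%nat) (y m) (Hx _) (Hx _) (Hy _) (Hy _)).
      pose proof (Hb (m + k)%nat). pose proof (Ha (m + k)%nat).
      simpl pow in *. set (t := r ^ (m + k)%nat) in *.
      assert (0 <= t) by (apply pow_le; lra).
      assert (c * (r * t) <= c * t) by (apply Rmult_le_compat_l; [lra|]; nra).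
      assert (K * r ^ m - 2 * c * t / (1 - r) + 2 * c * t = K * r ^ m - 2 * c * (r * t) / (1 - r))
        by (field; lra). lra. }
  assert (HK : 0 < K).
  { unfold K. assert (0 < 2 * c / (1 - r)) by (apply Rdiv_lt_0_compat; lra). lra. }
  assert (Hmono : forall N n, (N <= n)%nat -> r ^ n <= r ^ N).
  { intros N n Hn. replace n with (N + (n - N))%nat by lia. rewrite pow_add.
    pose proof (pow_incr r 1 (n - N) ltac:(lra)). rewrite pow1 in H.
    assert (0 <= r ^ N) by (apply pow_le; lra). nra. }
  assert (Hcauchy : cauchy_biseq theta x y).
  { intros eps He.
    destruct (pow_lt_1_zero r ltac:(rewrite Rabs_pos_eq; lra) (eps / K)
       ltac:(apply Rdiv_lt_0_compat; lra)) as [N HN].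
    exists N. intros n m Hn Hm.
    specialize (HN N (le_n _)). rewrite Rabs_pos_eq in HN by (apply pow_le; lra).
    assert (HKN : K * r ^ N < eps).
    { apply (Rmult_lt_compat_l K) in HN; auto. replace (K * (eps / K)) with eps in HN by (field; lra). lra. }
    destruct (Nat.le_gt_cases n m) as [Hnm|Hnm].
    - replace m with (n + (m - n))%nat by lia.
      pose proof (Hup n (m - n)%nat).
      assert (0 <= 2 * c * r ^ (n + (m - n)) / (1 - r)).
      { apply Rdiv_le_0_compat; [| lra]. assert (0 <= r ^ (n + (m-n))) by (apply pow_le; lra). nra. }
      pose proof (Hmono N n Hn). nra.
    - replace n with (m + (n - m))%nat by lia.
      pose proof (Hdown m (n - m)%nat).
      assert (0 <= 2 * c * r ^ (m + (n - m)) / (1 - r)).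
      { apply Rdiv_le_0_compat; [| lra]. assert (0 <= r ^ (m + (n-m))) by (apply pow_le; lra). nra. }
      pose proof (Hmono N m Hm). nra. }
  destruct (HC x y Hx Hy Hcauchy) as [[a [Pa Hxa]] [b [Eb Hyb]]].
  assert (Hdcv : Un_cv (fun n => theta (x n) (y n)) 0).
  { apply (geo_cv c r); [lra|]. intro n. split; auto. }
  assert (Hba : b = a).
  { apply Hth1; auto. apply Rle_antisym; [| apply Hth0; auto].
    apply (lim_zero_le _ _ _ _ Hyb Hdcv Hxa). intro n.
    apply Htri; auto. }
  subst b.
  assert (HFa : F a = a).
  { symmetry. apply Hth1; auto. apply Rle_antisym; [| apply Hth0; auto].
    pose proof (Hcont x a Hx Pa Hxa) as HF. unfold cvg_EP in HF.
    apply (lim_zero_le _ _ _ _ (cv_shift _ Hyb) (cv_shift _ Hdcv) HF). intro n.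
    apply Htri; auto. }
  exists a. split; [auto|]. split; auto.
  intros h [Eh|Ph] Hh.
  - apply Huniq; auto.
  - symmetry. apply Huniq; auto.
Qed.
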